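(* A (closed linear) subspace $X$ of $C([0,\omega_1])$ is separable if and only if there is a countable ordinal $\sigma$ such that $X$ is contained in the range of the projection $\widetilde{P}_\sigma$.
   Context: $\omega_1$ is the first uncountable ordinal; $[0,\omega_1]$ has the order topology and $C([0,\omega_1])$ is the Banach space of continuous scalar-valued functions with sup norm. For a countable ordinal $\sigma$, $\widetilde{P}_\sigma$ is the operator on $C([0,\omega_1])$ given by $\widetilde{P}_\sigma f=f\cdot\mathbf{1}_{[0,\sigma]}+f(\omega_1)\mathbf{1}_{[\sigma+1,\omega_1]}$. *)

(* Defs.v *)
From HB Require Import structures.
From mathcomp Require Import all_boot all_order all_algebra.
From mathcomp Require Import all_classical all_reals.
Set Implicit Arguments. Unset Strict Implicit. Unset Printing Implicit Defensive.
Import Order.TTheory GRing.Theory Num.Theory.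
Local Open Scope classical_set_scope.
Local Open Scope ring_scope.

(* The compact ordinal interval [0, w1] is modelled by an abstract totally
   ordered type T with greatest element w1 satisfying the defining properties
   of [0, omega_1]: T is well ordered, every element x other than w1 (i.e. every
   countable ordinal) has a countable initial segment [0, x], and the set of
   elements below w1 is uncountable.  These properties determine [0, omega_1]
   up to order isomorphism. *)
Definition is_omega1_interval (d : Order.disp_t) (T : orderType d) (w1 : T) : Prop :=
  [/\ (forall A : set T, A !=set0 -> exists2 x, A x & forall y, A y -> (x <= y)%O),
      (forall x : T, (x <= w1)%O),
      (forall x : T, x != w1 -> countable [set y : T | (y <= x)%O]) &
      ~ countable [set y : T | (y < w1)%O]].

Definition ord_nbhd (d : Order.disp_t) (T : orderType d) (x : T) (U : set T) : Prop :=
  exists (a b : option T),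
    [/\ (if a is Some a' then (a' < x)%O else true),
        (if b is Some b' then (x < b')%O else true) &
        (forall y : T, (if a is Some a' then (a' < y)%O else true) ->
                       (if b is Some b' then (y < b')%O else true) -> U y)].

Definition ord_continuous (d : Order.disp_t) (T : orderType d) (R : realType)
    (f : T -> R) : Prop :=
  forall (x : T) (e : R), 0 < e -> ord_nbhd x [set y | `|f y - f x| < e].

Definition CK (d : Order.disp_t) (T : orderType d) (R : realType) : set (T -> R) :=
  [set f | ord_continuous f].

Definition sup_close (d : Order.disp_t) (T : orderType d) (R : realType)
    (f g : T -> R) (e : R) : Prop :=
  forall t : T, `|f t - g t| <= e.

Definition closed_subspace (d : Order.disp_t) (T : orderType d) (R : realType)
    (X : set (T -> R)) : Prop :=
  [/\ X `<=` @CK d T R,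
      X (fun _ => 0),
      (forall f g, X f -> X g -> X (fun t => f t + g t)),
      (forall (c : R) f, X f -> X (fun t => c * f t)) &
      (forall f, @CK d T R f ->
         (forall e : R, 0 < e -> exists2 g, X g & sup_close f g e) -> X f)].

Definition separable_sub (d : Order.disp_t) (T : orderType d) (R : realType)
    (X : set (T -> R)) : Prop :=
  exists2 D : set (T -> R), D `<=` X /\ countable D &
    forall f, X f -> forall e : R, 0 < e -> exists2 g, D g & sup_close f g e.

Definition Ptilde (d : Order.disp_t) (T : orderType d) (R : realType)
    (w1 sigma : T) (f : T -> R) : T -> R :=
  fun t => if (t <= sigma)%O then f t else f w1.

Definition range_Ptilde (d : Order.disp_t) (T : orderType d) (R : realType)
    (w1 sigma : T) : set (T -> R) :=
  [set g | exists2 f, @CK d T R f & g = Ptilde w1 sigma f].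

(* Main.v *)
Require Import Defs.
From HB Require Import structures.
From mathcomp Require Import all_boot all_order all_algebra.
From mathcomp Require Import all_classical all_reals.
From mathcomp Require Import ring lra.
Set Implicit Arguments. Unset Strict Implicit. Unset Printing Implicit Defensive.
Import Order.TTheory GRing.Theory Num.Theory.
Local Open Scope classical_set_scope.
Local Open Scope ring_scope.

Lemma wo_ind d (T : orderType d) (P : T -> Prop) :
  (forall A : set T, A !=set0 -> exists2 x, A x & forall y, A y -> (x <= y)%O) ->
  (forall b, (forall a, (a < b)%O -> P a) -> P b) -> forall b, P b.
Proof.
move=> wo IH b; apply: contrapT => nPb.
have [x nPx xmin] := wo [set z | ~ P z] (ex_intro _ b nPb).
apply: nPx; apply: IH => a ax; apply: contrapT => nPa.
by have := xmin a nPa; rewrite leNgt ax.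
Qed.

Lemma below_w1 d (T : orderType d) (w1 : T) :
  is_omega1_interval w1 -> exists y : T, y != w1.
Proof.
case=> _ _ _ unc; apply: contrapT => H; apply: unc.
suff -> : [set y : T | (y < w1)%O] = set0 by [].
apply/seteqP; split => y //= yw; apply: H; exists y; by rewrite lt_eqF.
Qed.

Lemma ctbl_bound d (T : orderType d) (w1 : T) I (A : set I) (a : I -> T) :
  is_omega1_interval w1 -> countable A -> (forall i, A i -> a i != w1) ->
  exists2 y, y != w1 & forall i, A i -> (a i < y)%O.
Proof.
move=> [wo top cnt unc] cA aw; apply: contrapT => H; apply: unc.
apply: (@sub_countable _ _ _ (\bigcup_(i in A) [set y | (y <= a i)%O])).
  apply: subset_card_le => y /= yw.
  have : ~ (forall i, A i -> (a i < y)%O).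
    by move=> H2; apply: H; exists y => //; rewrite lt_eqF.
  move=> /existsNP [i] /not_implyP [Ai] /negP; rewrite -leNgt => yai.
  by exists i.
by apply: bigcup_countable => // i Ai; apply: cnt; apply: aw.
Qed.

Lemma zero_small (R : realType) (x : R) : (forall e : R, 0 < e -> `|x| <= e) -> x = 0.
Proof.
move=> H; apply/eqP; apply: contraT => x0.
have xp : 0 < `|x| by rewrite normr_gt0.
have := H (`|x| / 2); rewrite divr_gt0 // => /(_ isT) h.
lra.
Qed.

Lemma ev_const d (T : orderType d) (w1 : T) (R : realType) (f : T -> R) :
  is_omega1_interval w1 -> ord_continuous f ->
  exists2 y, y != w1 & forall t, (y < t)%O -> f t = f w1.
Proof.
move=> Hw fc.
have [y0 y0w] := below_w1 Hw.
have : forall n : nat, exists a, a != w1 /\ forall t, (a < t)%O -> `|f t - f w1| < n.+1%:R^-1.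
  move=> n; have [a [b [ha hb hU]]] := fc w1 (n.+1%:R^-1) (ltac:(by rewrite invr_gt0)).
  case: b hb hU => [b'|] hb hU.
    by case: Hw => _ top _ _; have := top b'; rewrite leNgt hb.
  case: a ha hU => [a'|] ha hU.
    by exists a'; split; [rewrite lt_eqF | move=> t hat; exact: hU].
  by exists y0; split => // t _; exact: hU.
move=> /choice [a Ha].
have [y yw Hy] := ctbl_bound Hw (countableP [set: nat]) (fun i _ => (Ha i).1).
exists y => // t yt; apply/eqP; rewrite -subr_eq0; apply/eqP; apply: zero_small => e e0.
have [k Hk] := ltr_add_invr e0; rewrite add0r in Hk.
apply: ltW; apply: (lt_trans _ Hk); apply: (Ha k).2. exact: lt_trans (Hy k I) yt.
Qed.
Lemma sep_range d (T : orderType d) (w1 : T) (R : realType) (X : set (T -> R)) :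
  is_omega1_interval w1 -> closed_subspace X -> separable_sub X ->
  exists2 sigma : T, sigma != w1 & X `<=` @range_Ptilde d T R w1 sigma.
Proof.
move=> Hw [XC _ _ _ _] [D [DX cD] Dd].
have [y0 y0w] := below_w1 Hw.
have : forall g : T -> R, exists y, D g -> y != w1 /\ forall t, (y < t)%O -> g t = g w1.
  move=> g; have [Dg|nDg] := pselect (D g); last by exists y0.
  have [y yw Hy] := ev_const Hw (XC _ (DX _ Dg)).
  by exists y.
move=> /choice [a Ha].
have [s sw Hs] := ctbl_bound Hw cD (fun g Dg => (Ha g Dg).1).
exists s => // f Xf; exists f; first exact: XC.
apply: funext => t; rewrite /Ptilde; case: leP => // st.
apply/eqP; rewrite -subr_eq0; apply/eqP; apply: zero_small => e e0.
have e2 : 0 < e / 2 by rewrite divr_gt0.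
have [g Dg fg] := Dd f Xf _ e2.
have gc : g t = g w1 by apply: (Ha g Dg).2; exact: lt_trans (Hs g Dg) st.
have h1 := fg t; have h2 := fg w1.
have -> : f t - f w1 = (f t - g t) - (f w1 - g w1) by rewrite gc; ring.
apply: (le_trans (ler_normB _ _)); lra.
Qed.
Lemma rat_approx (R : realType) (x : R) (del : R) : 0 < del ->
  exists q : rat, `|x - ratr q| < del.
Proof.
move=> dp; have : x - del < x + del by lra.
move=> /rat_in_itvoo [q]; rewrite in_itv /= => /andP [h1 h2].
by exists q; rewrite ltr_norml; apply/andP; split; lra.
Qed.

Fixpoint stepf d (T : orderType d) (R : realType) (e : nat -> T)
  (L : seq (nat * rat)) (t : T) : R :=
  if L is p :: L' then (if (t <= e p.1)%O then ratr p.2 else stepf R e L' t) else 0.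

Lemma stepf_cat d (T : orderType d) (R : realType) (e : nat -> T) L1 L2 t :
  stepf R e (L1 ++ L2) t =
  if has (fun p => (t <= e p.1)%O) L1 then stepf R e L1 t else stepf R e L2 t.
Proof.
elim: L1 => //= p L IH; case: ifP => //.
Qed.

Lemma step_approx d (T : orderType d) (R : realType) (e : nat -> T) (sigma : T)
  (g : T -> R) (del : R) :
  (forall A : set T, A !=set0 -> exists2 x, A x & forall y, A y -> (x <= y)%O) ->
  (forall b, (b <= sigma)%O -> exists i, e i = b) ->
  ord_continuous g -> 0 < del ->
  forall b, (b <= sigma)%O -> exists L,
    [/\ all (fun p => (e p.1 <= b)%O) L, has (fun p => (b <= e p.1)%O) L &
        forall t, (t <= b)%O -> `|g t - stepf R e L t| <= del].
Proof.
move=> wo ee gc dp; apply: (wo_ind wo) => b IH bs.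
have d2 : 0 < del / 2 by rewrite divr_gt0.
have [i ei] := ee b bs.
have [q hq] := rat_approx (g b) d2.
have [a [bb [ha hb hU]]] := gc b _ d2.
have near t : (t <= b)%O -> is_true (if a is Some a' then (a' < t)%O else true) ->
    `|g t - ratr q| <= del.
  move=> tb ta; have := hU t ta.
  have hb' : is_true (if bb is Some b' then (t < b')%O else true).
    by case: bb hb {hU} => // b' hb; exact: le_lt_trans tb hb.
  move=> /(_ hb') /= h.
  have -> : g t - ratr q = (g t - g b) + (g b - ratr q) by ring.
  by apply: (le_trans (ler_normD _ _)); lra.
case: a ha hU near => [a'|] ha hU near.
  have [L [hall hhas hL]] := IH a' ha (le_trans (ltW ha) bs).
  exists (L ++ [:: (i, q)]); split.
  - rewrite all_cat /= ei lexx !andbT.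
    apply: sub_all hall => p /= pa; exact: le_trans pa (ltW ha).
  - by rewrite has_cat /= ei lexx orbT.
  move=> t tb; rewrite stepf_cat.
  case: (leP t a') => ta.
    have -> : has (fun p => (t <= e p.1)%O) L.
      by apply: sub_has hhas => p /= pa; exact: le_trans ta pa.
    exact: hL.
  have -> : has (fun p => (t <= e p.1)%O) L = false.
    apply/negbTE/hasPn => p pL; move/allP: hall => /(_ p pL) /= pa.
    by rewrite -ltNge; exact: le_lt_trans pa ta.
  by rewrite /= ei tb; apply: near.
exists [:: (i, q)]; split => /=; rewrite ?ei ?lexx //.
by move=> t tb; rewrite tb; apply: near.
Qed.
Lemma range_sep d (T : orderType d) (w1 : T) (R : realType) (X : set (T -> R))
  (sigma : T) :
  is_omega1_interval w1 -> closed_subspace X -> sigma != w1 ->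
  X `<=` @range_Ptilde d T R w1 sigma -> separable_sub X.
Proof.
move=> [wo top cnt unc] [XC X0 _ _ _] sw Xr.
have /countable_injP [fi fiinj] := cnt sigma sw.
have : forall n : nat, exists x, (exists y, (y <= sigma)%O /\ fi y = n) ->
    (x <= sigma)%O /\ fi x = n.
  move=> n; have [[y hy]|nh] := pselect (exists y, (y <= sigma)%O /\ fi y = n).
    by exists y.
  by exists sigma.
move=> /choice [e He].
have ee : forall b, (b <= sigma)%O -> exists i, e i = b.
  move=> b bs; exists (fi b).
  have [h1 h2] := He (fi b) (ex_intro _ b (conj bs erefl)).
  by apply: fiinj => //; rewrite inE.
pose H (c : seq (nat * rat) * rat) (t : T) : R :=
  if (t <= sigma)%O then stepf R e c.1 t else ratr c.2.
have approx : forall f, X f -> forall del : R, 0 < del ->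
    exists c, sup_close f (H c) del.
  move=> f Xf del dp.
  have [L [_ _ hL]] := step_approx wo ee (XC _ Xf) dp (lexx sigma).
  have [q hq] := rat_approx (f w1) dp.
  exists (L, q); rewrite /sup_close => t; rewrite /H /=; case: ifPn => ts; first exact: hL.
  have [f0 _ fE] := Xr f Xf; rewrite fE /Ptilde in hq *.
  by rewrite (negbTE ts); rewrite if_same in hq; exact: ltW.
have : forall c : (seq (nat * rat) * rat) * nat, exists g, X g /\
    ((exists g', X g' /\ sup_close (H c.1) g' (c.2.+1%:R^-1)) ->
     sup_close (H c.1) g (c.2.+1%:R^-1)).
  move=> c; have [[g [Xg hg]]|nh] := pselect
    (exists g', X g' /\ sup_close (H c.1) g' (c.2.+1%:R^-1)).
    by exists g.
  by exists (fun _ => 0); split.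
move=> /choice [G HG].
exists (range G).
  split; first by move=> g [c _ <-]; exact: (HG c).1.
  exact: sub_countable (card_image_le _ _) (countableP _).
move=> f Xf eps ep.
have ep2 : 0 < eps / 2 by rewrite divr_gt0.
have [m Hm] := ltr_add_invr ep2; rewrite add0r in Hm.
have [c hc] := approx f Xf (m.+1%:R^-1) (ltac:(by rewrite invr_gt0)).
exists (G (c, m)); first by exists (c, m).
have hG : sup_close (H c) (G (c, m)) (m.+1%:R^-1).
  apply: (HG (c, m)).2; exists f; split => // t'; rewrite distrC; exact: hc.
rewrite /sup_close => t.
have hGt := hG t.
have h1 := hc t.
have -> : f t - G (c, m) t = (f t - H c t) + (H c t - G (c, m) t) by ring.
apply: (le_trans (ler_normD _ _)).
move: (m.+1%:R^-1) Hm h1 hGt => r Hm h1 hGt; lra.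
Qed.

Theorem lemma4p2 (d : Order.disp_t) (T : orderType d) (w1 : T) (R : realType)
    (X : set (T -> R)) :
  is_omega1_interval w1 -> closed_subspace X ->
  (separable_sub X <->
   exists2 sigma : T, sigma != w1 & X `<=` @range_Ptilde d T R w1 sigma).
Proof.
move=> Hw HX; split; first exact: sep_range.
by move=> [s sw Hs]; exact: range_sep Hw HX sw Hs.
Qed.
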